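(* Let $\phi$ be an entanglement-breaking channel acting on $d\times d$ complex matrices. Suppose there exists a positive semidefinite matrix $A\ge 0$ with $\operatorname{rk}A=r<d$ such that $s=\operatorname{rk}\phi(A)$ satisfies $r^2+s^2<2dr$. Then the kernel of $\phi$ (as a linear map on $\mathcal M(d;\mathbb C)$) satisfies $$\dim\ker\phi\ \ge\ 2dr-r^2-s^2\ >\ 0 .$$
   Context: A quantum channel is a completely positive, trace-preserving linear map on $\mathcal M(d;\mathbb C)$. It is entanglement-breaking (EB) if for every system $B$ and every state $\rho_{AB}$ the output $(\phi\otimes I)(\rho_{AB})$ is separable; equivalently, $\phi$ can be written as $\phi(X)=\sum_i\rho_i\operatorname{Tr}[E_iX]$ with density matrices $\rho_i$ and positive operators $E_i$ summing to $\mathbb 1$. *)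

(* Defs.v *)
(* Complex matrices over an arbitrary numeric closed field C
   (e.g. algC). *)
From HB Require Import structures.
From mathcomp Require Import all_boot all_order all_algebra.
Set Implicit Arguments. Unset Strict Implicit. Unset Printing Implicit Defensive.
Import Order.TTheory GRing.Theory Num.Theory.
Local Open Scope ring_scope.

Section QDefs.
Variable C : numClosedFieldType.

Definition psdmx n (A : 'M[C]_n) : Prop :=
  forall v : 'cV[C]_n, 0 <= ((map_mx Num.conj v)^T *m A *m v) 0 0.

Definition state n (A : 'M[C]_n) : Prop := psdmx A /\ \tr A = 1.

(* splitting an index of 'I_(m * n) into its pair (inverse of mxvec_index) *)
Definition unpair_idx m n (k : 'I_(m * n)) : 'I_m * 'I_n :=
  enum_val (cast_ord (esym (mxvec_cast m n)) k).

(* Kronecker (tensor) product A (x) B, indexed compatibly with mxvec_index *)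
Definition kronmx m1 n1 m2 n2 (A : 'M[C]_(m1, n1)) (B : 'M[C]_(m2, n2))
  : 'M[C]_(m1 * m2, n1 * n2) :=
  \matrix_(i, j) (A (unpair_idx i).1 (unpair_idx j).1 *
                  B (unpair_idx i).2 (unpair_idx j).2).

(* the (c,e) block of rho : 'M_(d*k), an operator on the first factor *)
Definition blockmx d k (rho : 'M[C]_(d * k)) (c e : 'I_k) : 'M[C]_d :=
  \matrix_(a, b) rho (mxvec_index a c) (mxvec_index b e).

(* (phi (x) id_k)(rho) *)
Definition ampl d k (phi : 'M[C]_d -> 'M[C]_d) (rho : 'M[C]_(d * k))
  : 'M[C]_(d * k) :=
  \sum_(c < k) \sum_(e < k) kronmx (phi (blockmx rho c e)) (delta_mx c e).

Definition separable d k (rho : 'M[C]_(d * k)) : Prop :=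
  exists (N : nat) (p : 'I_N -> C) (s : 'I_N -> 'M[C]_d) (t : 'I_N -> 'M[C]_k),
    [/\ forall i, 0 <= p i /\ state (s i) /\ state (t i),
        \sum_i p i = 1 &
        rho = \sum_i p i *: kronmx (s i) (t i)].

(* completely positive, trace preserving (linearity is carried by the type) *)
Definition completely_positive d (phi : 'M[C]_d -> 'M[C]_d) : Prop :=
  forall (k : nat) (rho : 'M[C]_(d * k)), psdmx rho -> psdmx (ampl phi rho).

Definition trace_preserving d (phi : 'M[C]_d -> 'M[C]_d) : Prop :=
  forall X, \tr (phi X) = \tr X.

Definition quantum_channel d (phi : {linear 'M[C]_d -> 'M[C]_d}) : Prop :=
  completely_positive phi /\ trace_preserving phi.

Definition entanglement_breaking d (phi : {linear 'M[C]_d -> 'M[C]_d}) : Prop :=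
  quantum_channel phi /\
  forall (k : nat) (rho : 'M[C]_(d * k)), state rho -> separable (ampl phi rho).

End QDefs.

(* Main.v *)
Require Import Defs.
From mathcomp Require Import all_boot all_order all_algebra.
From mathcomp Require Import ring.
Import Order.TTheory GRing.Theory Num.Theory.
Set Implicit Arguments. Unset Strict Implicit. Unset Printing Implicit Defensive.
Local Open Scope ring_scope.
Section S.
Variable C : numClosedFieldType.
Definition form n (M : 'M[C]_n) (u v : 'cV[C]_n) : C :=
  ((map_mx Num.conj u)^T *m M *m v) 0 0.
Lemma formDl n (M : 'M[C]_n) u1 u2 v : form M (u1 + u2) v = form M u1 v + form M u2 v.
Proof. by rewrite /form map_mxD linearD /= !mulmxDl mxE. Qed.
Lemma formDr n (M : 'M[C]_n) u v1 v2 : form M u (v1 + v2) = form M u v1 + form M u v2.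
Proof. by rewrite /form mulmxDr mxE. Qed.
Lemma formZl n (M : 'M[C]_n) a u v : form M (a *: u) v = a^* * form M u v.
Proof. by rewrite /form map_mxZ linearZ /= -!scalemxAl mxE. Qed.
Lemma formZr n (M : 'M[C]_n) a u v : form M u (a *: v) = a * form M u v.
Proof. by rewrite /form -!scalemxAr mxE. Qed.
Lemma form_delta n (M : 'M[C]_n) a b : form M (delta_mx a 0) (delta_mx b 0) = M a b.
Proof.
rewrite /form map_delta_mx trmx_delta mxE (bigD1 b) //= big1 ?addr0.
  rewrite mxE (bigD1 a) //= big1 ?addr0; last by move=> i /negbTE ni; rewrite !mxE ni /= mul0r.
  by rewrite !mxE !eqxx /= mul1r mulr1.
move=> j /negbTE nj; by rewrite [delta_mx b 0 j 0]mxE nj mulr0.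
Qed.
Lemma psd_real n (M : 'M[C]_n) v : 0 <= form M v v -> (form M v v)^* = form M v v.
Proof. by move/ger0_real/conj_Creal. Qed.

Lemma psd_herm n (M : 'M[C]_n) : (forall v, 0 <= form M v v) ->
  forall u v, form M u v = (form M v u)^*.
Proof.
move=> H u v.
have h1 := psd_real (H (u + v)); have h2 := psd_real (H (u + 'i *: v)).
have hu := psd_real (H u); have hv := psd_real (H v).
rewrite !(formDl, formDr, formZl, formZr) in h1 h2.
move: h1 h2 hu hv; set a := form M u v; set b := form M v u; set qu := form M u u; set qv := form M v v.
rewrite !(rmorphD, rmorphM) /= !conjCK conjCi => h1 h2 hu hv.
clearbody a b qu qv.
rewrite hu hv in h1 h2.
move/eqP: h1; rewrite -subr_eq0 => /eqP h1.
move/eqP: h2; rewrite -subr_eq0 => /eqP h2.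
have e1 : (a^* + b^*) - (a + b) = 0. by rewrite -[RHS]h1; ring.
have e2 : 'i * ((b^* - a^*) - (a - b)) = 0 by rewrite -[RHS]h2; ring.
move: e2 => /eqP; rewrite mulf_eq0 (negbTE (neq0Ci _)) /= => /eqP e2.
have : (a - b^*) *+ 2 = - ((a^* + b^*) - (a + b) + ((b^* - a^*) - (a - b))) by ring.
rewrite e1 e2 addr0 oppr0.
by move/eqP; rewrite mulrn_eq0 /= subr_eq0 => /eqP.
Qed.
Lemma form_deltal n (M : 'M[C]_n) i v : form M (delta_mx i 0) v = (M *m v) i 0.
Proof.
rewrite /form map_delta_mx trmx_delta -mulmxA mxE (bigD1 i) //= big1 ?addr0.
  by rewrite mxE !eqxx mul1r.
by move=> j /negbTE nj; rewrite mxE nj mul0r.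
Qed.

Lemma psd_null n (M : 'M[C]_n) v : (forall w, 0 <= form M w w) ->
  form M v v = 0 -> forall u, form M u v = 0.
Proof.
move=> H hvv u.
have herm := psd_herm H.
have hg := H u; set g := form M u u in hg.
set a := form M u v.
have hvu : form M v u = a^* by rewrite herm.
have hw := H ((g+1) *: v + (-a) *: u).
rewrite !formDl !formDr !formZl !formZr hvv hvu -/a -/g in hw.
have hg' : (g + 1)^* = g + 1.
  by apply/conj_Creal/ger0_real; rewrite addr_ge0.
rewrite hg' rmorphN /= in hw.
have E : (g + 1) * ((g + 1) * 0) + (g + 1) * (- a * a^*) +
    (- a^* * ((g + 1) * a) + - a^* * (- a * g)) = - ((a * a^*) * (g + 2)) by ring.
rewrite E in hw.
rewrite oppr_ge0 in hw.
have hpos : 0 <= (a * a^*) * (g + 2).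
  by rewrite mulr_ge0 ?mul_conjC_ge0 // addr_ge0.
have : (a * a^*) * (g + 2) = 0 by apply/eqP; rewrite eq_le hw hpos.
move/eqP; rewrite mulf_eq0 mul_conjC_eq0 => /orP [/eqP //|].
by rewrite gt_eqF // ltr_wpDl.
Qed.

Lemma psd_null_mx n (M : 'M[C]_n) v : (forall w, 0 <= form M w w) ->
  form M v v = 0 -> M *m v = 0.
Proof.
move=> H hvv; apply/matrixP => i j; rewrite (ord1 j) -form_deltal mxE.
exact: psd_null.
Qed.

Definition ctr m n (M : 'M[C]_(m, n)) : 'M[C]_(n, m) := (map_mx Num.conj M)^T.

Lemma ctrM m n p (X : 'M[C]_(m, n)) (Y : 'M[C]_(n, p)) : ctr (X *m Y) = ctr Y *m ctr X.
Proof. by rewrite /ctr map_mxM trmx_mul. Qed.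

Lemma ctrK m n (X : 'M[C]_(m, n)) : ctr (ctr X) = X.
Proof. by apply/matrixP => i j; rewrite !mxE conjCK. Qed.

Lemma ctr1 n : ctr (1%:M : 'M[C]_n) = 1%:M.
Proof. by apply/matrixP => i j; rewrite !mxE eq_sym; case: (_ == _); rewrite /= ?rmorph1 ?rmorph0. Qed.

Lemma psd_ctr n (M : 'M[C]_n) : (forall w, 0 <= form M w w) -> ctr M = M.
Proof.
move=> H; apply/matrixP => i j; rewrite !mxE -form_delta (psd_herm H) form_delta.
by rewrite conjCK.
Qed.

Lemma unpairK m n (a : 'I_m) (c : 'I_n) : unpair_idx (mxvec_index a c) = (a, c).
Proof. by rewrite /unpair_idx /mxvec_index cast_ordK enum_rankK. Qed.

Lemma kron_entry m1 n1 m2 n2 (X : 'M[C]_(m1, n1)) (Y : 'M[C]_(m2, n2)) a c b e :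
  kronmx X Y (mxvec_index a c) (mxvec_index b e) = X a b * Y c e.
Proof. by rewrite mxE !unpairK. Qed.

Lemma amplE d k (phi : 'M[C]_d -> 'M[C]_d) (rho : 'M[C]_(d * k)) :
  ampl phi rho = \sum_(c < k) \sum_(e < k) kronmx (phi (blockmx rho c e)) (delta_mx c e).
Proof. by []. Qed.

Lemma sep_blocks d k (phi : 'M[C]_d -> 'M[C]_d) (rho : 'M[C]_(d * k)) :
  separable (ampl phi rho) ->
  exists N (p : 'I_N -> C) (s : 'I_N -> 'M[C]_d) (t : 'I_N -> 'M[C]_k),
    (forall i, 0 <= p i /\ psdmx (s i) /\ psdmx (t i)) /\
    forall c e, phi (blockmx rho c e) = \sum_i (p i * t i c e) *: s i.
Proof.
case=> N [p [s [t [Hi _ Hr]]]]; exists N, p, s, t; split.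
  by move=> i; have [? [[? _] [? _]]] := Hi i.
move=> c e; apply/matrixP => a b.
transitivity ((ampl phi rho) (mxvec_index a c) (mxvec_index b e)); last first.
  rewrite Hr !summxE; apply: eq_bigr => i _.
  by rewrite !mxE !unpairK /=; ring.
rewrite amplE summxE (bigD1 c) //= [X in _ + X]big1 ?addr0; last first.
  move=> c' /negbTE nc; rewrite summxE big1 // => e' _.
  by rewrite kron_entry mxE eq_sym nc mulr0.
rewrite summxE (bigD1 e) //= [X in _ + X]big1 ?addr0; last first.
  by move=> e' /negbTE ne; rewrite kron_entry mxE [e == _]eq_sym ne andbF mulr0.
by rewrite kron_entry mxE !eqxx mulr1.
Qed.

Lemma mul_delta_col m n (M : 'M[C]_(m, n)) x j : (M *m (delta_mx j 0 : 'cV_n)) x 0 = M x j.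
Proof.
rewrite mxE (bigD1 j) //= [X in _ + X]big1 ?addr0; first by rewrite mxE !eqxx mulr1.
by move=> i /negbTE ni; rewrite mxE ni mulr0.
Qed.

Definition Gam d k (G : 'I_k -> 'M[C]_d) : 'M[C]_(d, d * k) :=
  \matrix_(x, j) G (unpair_idx j).2 x (unpair_idx j).1.

Lemma Gam_entry d k (G : 'I_k -> 'M[C]_d) x a c : Gam G x (mxvec_index a c) = G c x a.
Proof. by rewrite mxE unpairK. Qed.

Lemma block_rho0 d k (G : 'I_k -> 'M[C]_d) (A : 'M[C]_d) c e :
  blockmx (ctr (Gam G) *m A *m Gam G) c e = ctr (G c) *m A *m G e.
Proof.
apply/matrixP => a b; rewrite !mxE; apply: eq_bigr => y _; rewrite !mxE !unpairK.
congr (_ * _); apply: eq_bigr => z _; by rewrite !mxE !unpairK.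
Qed.

Lemma formZM n (M : 'M[C]_n) a v w : form (a *: M) v w = a * form M v w.
Proof. by rewrite /form -scalemxAr -scalemxAl mxE. Qed.

Lemma form_conj n m (M : 'M[C]_n) (X : 'M[C]_(n, m)) v w :
  form (ctr X *m M *m X) v w = form M (X *m v) (X *m w).
Proof. by rewrite /form /ctr map_mxM trmx_mul !mulmxA. Qed.

Lemma AGam d k (G : 'I_k -> 'M[C]_d) (A : 'M[C]_d) x a c :
  (A *m Gam G) x (mxvec_index a c) = (A *m G c) x a.
Proof. by rewrite !mxE; apply: eq_bigr => y _; rewrite !mxE !unpairK. Qed.

Lemma tr_rho0_pos d k (G : 'I_k -> 'M[C]_d) (A : 'M[C]_d) c0 :
  psdmx A -> A != 0 -> G c0 = 1%:M -> 0 < \tr (ctr (Gam G) *m A *m Gam G).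
Proof.
move=> HA nA HG.
have hj : forall j, (ctr (Gam G) *m A *m Gam G) j j = form A (Gam G *m delta_mx j 0) (Gam G *m delta_mx j 0).
  by move=> j; rewrite -form_delta form_conj.
have hge : forall j, 0 <= (ctr (Gam G) *m A *m Gam G) j j by move=> j; rewrite hj; apply: HA.
rewrite lt_def; apply/andP; split; last by rewrite /mxtrace sumr_ge0 // => j _; apply: hge.
rewrite /mxtrace; apply/negP => /eqP h0; move/negP: nA; apply; apply/eqP/matrixP => x a.
have := @psumr_eq0P _ _ _ _ (fun j _ => hge j) h0 (mxvec_index a c0) isT.
rewrite hj => /(psd_null_mx HA) /matrixP /(_ x 0).
by rewrite mulmxA mul_delta_col AGam HG mulmx1 !mxE.
Qed.

Lemma sand m n p (L : 'M[C]_(m, n)) (L' : 'M[C]_(n, m)) (R : 'M[C]_(n, p))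
  (M : 'M[C]_(m, p)) X Y :
  L' *m L = 1%:M -> M = L *m X -> M = Y *m R -> M = L *m (L' *m Y) *m R.
Proof.
move=> HL HX HY.
have E : L *m L' *m M = M by rewrite {2}HX HX !mulmxA -(mulmxA L) HL mulmx1.
by rewrite -{1}E {1}HY !mulmxA.
Qed.

Definition Wsp d (B : 'M[C]_d) : {vspace 'M[C]_d} :=
  limg (linfun (mulmxr (row_base B) \o mulmx (col_base B))).

Lemma formSum n I (r : seq I) (P : pred I) (F : I -> 'M[C]_n) v w :
  form (\sum_(i <- r | P i) F i) v w = \sum_(i <- r | P i) form (F i) v w.
Proof. by rewrite /form mulmx_sumr mulmx_suml summxE. Qed.

Lemma supp d N (a : 'I_N -> C) (S : 'I_N -> 'M[C]_d) (B : 'M[C]_d) j :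
  (forall i, 0 <= a i) -> (forall i, psdmx (S i)) -> B = \sum_i a i *: S i ->
  a j != 0 -> S j \in Wsp B.
Proof.
move=> Ha HS HB naj.
have fB : forall v, form B v v = \sum_i a i * form (S i) v v.
  by move=> v; rewrite HB formSum; apply: eq_bigr => i _; rewrite formZM.
have hB : forall v, 0 <= form B v v.
  by move=> v; rewrite fB sumr_ge0 // => i _; rewrite mulr_ge0 //; apply: HS.
have hker : forall v : 'cV[C]_d, B *m v = 0 -> S j *m v = 0.
  move=> v Bv; apply: (psd_null_mx (HS j)).
  have h0 : \sum_i a i * form (S i) v v = 0 by rewrite -fB /form -mulmxA Bv mulmx0 mxE.
  have := @psumr_eq0P _ _ _ _ (fun i _ => mulr_ge0 (Ha i) (HS i v)) h0 j isT.
  by move/eqP; rewrite mulf_eq0 (negbTE naj) /= => /eqP.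
have hsub : (S j <= B)%MS.
  rewrite submxE; apply/eqP/matrixP => x y.
  rewrite -mul_delta_col -mulmxA hker ?mxE //.
  by rewrite mulmxA mulmx_coker mul0mx.
case/submxP: hsub => D HD.
have HD2 : S j = B *m ctr D.
  by rewrite -(psd_ctr (HS j)) HD ctrM (psd_ctr hB).
have [L' HL'] := row_fullP (col_base_full B).
have HB2 : S j = col_base B *m (row_base B *m ctr D) by rewrite mulmxA mulmx_base.
have HB3 : S j = (D *m col_base B) *m row_base B by rewrite -mulmxA mulmx_base.
have := sand HL' HB2 HB3 => E.
apply/memv_imgP; exists (L' *m (D *m col_base B)); first exact: memvf.
by rewrite lfunE /= E.
Qed.

Lemma blockZ d k (a : C) (rho : 'M[C]_(d * k)) c e :
  blockmx (a *: rho) c e = a *: blockmx rho c e.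
Proof. by apply/matrixP => x y; rewrite !mxE. Qed.

Lemma psd_diag n (M : 'M[C]_n) i : psdmx M -> 0 <= M i i.
Proof. by move=> H; rewrite -form_delta; apply: H. Qed.

Lemma psd_zero_row n (M : 'M[C]_n) i c : psdmx M -> M i i = 0 -> M c i = 0 /\ M i c = 0.
Proof.
move=> H h.
have h1 : form M (delta_mx c 0) (delta_mx i 0) = 0.
  by apply: (psd_null H); rewrite form_delta.
rewrite form_delta in h1; split => //.
by rewrite -form_delta (psd_herm H) form_delta h1 rmorph0.
Qed.

Lemma eb_core d (phi : {linear 'M[C]_d -> 'M[C]_d}) (A : 'M[C]_d) Z :
  entanglement_breaking phi -> psdmx A -> A != 0 ->
  phi (A *m Z) \in Wsp (phi A) /\ phi (ctr Z *m A) \in Wsp (phi A).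
Proof.
move=> [_ HEB] HA nA.
pose G (c : 'I_2) := if c == 0 then 1%:M else Z.
have G0 : G 0 = 1%:M by rewrite /G eqxx.
have G1 : G 1 = Z by rewrite /G.
have tpos := tr_rho0_pos HA nA G0.
set rho0 := ctr (Gam G) *m A *m Gam G in tpos.
set tau := \tr rho0 in tpos.
have tnz : tau != 0 by rewrite gt_eqF.
have Hst : state (tau^-1 *: rho0).
  split; last by rewrite mxtraceZ mulVf.
  move=> v; change (0 <= form (tau^-1 *: rho0) v v).
  rewrite formZM; apply: mulr_ge0; first by rewrite invr_ge0 ltW.
  rewrite form_conj; exact: HA.
have [N [p [s [t [Hpst Hbl]]]]] := sep_blocks (HEB 2 _ Hst).
have Hw : forall c e, phi (ctr (G c) *m A *m G e) = \sum_i (tau * (p i * t i c e)) *: s i.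
  move=> c e; have := Hbl c e; rewrite blockZ block_rho0 linearZ /=.
  move/(congr1 (fun M => tau *: M)); rewrite scalerA mulfV // scale1r => ->.
  by rewrite scaler_sumr; apply: eq_bigr => i _; rewrite scalerA.
have HA' : phi A = \sum_i (tau * (p i * t i 0 0)) *: s i by rewrite -Hw G0 ctr1 mul1mx mulmx1.
have nonneg : forall i, 0 <= tau * (p i * t i 0 0).
  move=> i; have [hp [hs ht]] := Hpst i.
  by apply: mulr_ge0; [exact: ltW | apply: mulr_ge0 => //; exact: psd_diag].
have gen : forall c e, (forall i, t i 0 0 = 0 -> t i c e = 0) ->
    phi (ctr (G c) *m A *m G e) \in Wsp (phi A).
  move=> c e Hce; rewrite Hw; apply: memv_suml => i _.
  have [hp [hs ht]] := Hpst i.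
  case: (eqVneq (tau * (p i * t i 0 0)) 0) => h.
    move/eqP: h; rewrite mulf_eq0 (negbTE tnz) /= mulf_eq0 => /orP [/eqP -> | /eqP h].
      by rewrite mul0r mulr0 scale0r mem0v.
    by rewrite Hce // mulr0 mulr0 scale0r mem0v.
  by apply: memvZ; apply: (supp nonneg _ HA' h) => j; have [_ []] := Hpst j.
split.
  have := gen 0 1 (fun i h => proj2 (psd_zero_row 1 (proj2 (proj2 (Hpst i))) h)).
  by rewrite G0 G1 ctr1 mul1mx.
have := gen 1 0 (fun i h => proj1 (psd_zero_row 1 (proj2 (proj2 (Hpst i))) h)).
by rewrite G0 G1 mulmx1.
Qed.

Lemma rinv_aux m n p (L : 'M[C]_(m,n)) (R : 'M[C]_(n,p)) (R' : 'M[C]_(p,n)) (A : 'M[C]_(m,p)) :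
  L *m R = A -> R *m R' = 1%:M -> A *m R' = L.
Proof. by move=> <- H; rewrite -mulmxA H mulmx1. Qed.
Lemma linv_aux m n p (L : 'M[C]_(m,n)) (R : 'M[C]_(n,p)) (L' : 'M[C]_(n,m)) (A : 'M[C]_(m,p)) :
  L *m R = A -> L' *m L = 1%:M -> L' *m A = R.
Proof. by move=> <- H; rewrite mulmxA H mul1mx. Qed.
Lemma linj m n p (L : 'M[C]_(m,n)) (L' : 'M[C]_(n,m)) (Y1 Y2 : 'M[C]_(n,p)) :
  L' *m L = 1%:M -> L *m Y1 = L *m Y2 -> Y1 = Y2.
Proof. by move=> H h; have := congr1 (mulmx L') h; rewrite !mulmxA H !mul1mx. Qed.
Lemma rinj m n p (R : 'M[C]_(n,p)) (R' : 'M[C]_(p,n)) (Y1 Y2 : 'M[C]_(m,n)) :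
  R *m R' = 1%:M -> Y1 *m R = Y2 *m R -> Y1 = Y2.
Proof. by move=> H h; have := congr1 (mulmxr R') h; rewrite /= -!mulmxA H !mulmx1. Qed.
Lemma dim_mat m n : \dim (fullv : {vspace 'M[C]_(m, n)}) = (m * n)%N.
Proof. by rewrite dimvf dim_matrix. Qed.
End S.

From mathcomp Require Import zify.
Unset Implicit Arguments.

Theorem mainTheorem4 (C : numClosedFieldType) (d : nat)
    (phi : {linear 'M[C]_d -> 'M[C]_d}) (A : 'M[C]_d) (r s : nat) :
  entanglement_breaking phi ->
  psdmx A -> \rank A = r -> (r < d)%N ->
  \rank (phi A) = s ->
  (r ^ 2 + s ^ 2 < 2 * d * r)%N ->
  (2 * d * r - (r ^ 2 + s ^ 2) <= \dim (lker (linfun phi)))%N /\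
  (0 < 2 * d * r - (r ^ 2 + s ^ 2))%N.
Proof.
move=> HEB HA rA rd rs hineq.
split; last by rewrite subn_gt0.
have nA : A != 0.
  apply/eqP => A0; rewrite A0 mxrank0 in rA; rewrite -rA in hineq; lia.
have [L' HL'] := row_fullP (col_base_full A).
have [R' HR'] := row_freeP (row_base_free A).
set L := col_base A in HL'; set R := row_base A in HR'.
have HLR : L *m R = A by rewrite mulmx_base.
pose f1 : 'Hom('M[C]_(\rank A, d), 'M[C]_d) := linfun (mulmx L).
pose f2 : 'Hom('M[C]_(d, \rank A), 'M[C]_d) := linfun (mulmxr R).
pose f3 : 'Hom('M[C]_(\rank A, \rank A), 'M[C]_d) := linfun (mulmxr R \o mulmx L).
pose V1 := limg f1; pose V2 := limg f2; pose V := (V1 + V2)%VS.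
pose F := linfun phi.
have hsubW : (F @: V <= Wsp (phi A))%VS.
  rewrite limgD subv_add; apply/andP; split; apply/subvP => X /memv_imgP [X0 /memv_imgP [Y _ ->] ->];
    rewrite !lfunE /=.
    have -> : L *m Y = A *m (R' *m Y) by rewrite mulmxA (rinv_aux HLR HR').
    by have [] := eb_core (R' *m Y) HEB HA nA.
  have -> : Y *m R = ctr (ctr (Y *m L')) *m A by rewrite ctrK -mulmxA (linv_aux HLR HL').
  by have [] := eb_core (ctr (Y *m L')) HEB HA nA.
have hdimV1 : \dim V1 = (\rank A * d)%N.
  rewrite limg_dim_eq ?dim_mat // capfv; apply/eqP/lker0P => Y1 Y2.
  by rewrite !lfunE /= => h; apply: (linj HL' h).
have hdimV2 : \dim V2 = (d * \rank A)%N.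
  rewrite limg_dim_eq ?dim_mat // capfv; apply/eqP/lker0P => Y1 Y2.
  by rewrite !lfunE /= => h; apply: (rinj HR' h).
have hcap : (V1 :&: V2 <= limg f3)%VS.
  apply/subvP => X; rewrite memv_cap => /andP [/memv_imgP [Y1 _ E1] /memv_imgP [Y2 _ E2]].
  rewrite lfunE /= in E1; rewrite lfunE /= in E2.
  apply/memv_imgP; exists (L' *m Y2); first exact: memvf.
  rewrite lfunE /=; exact: sand HL' E1 E2.
have hf3 : (\dim (limg f3) <= \rank A * \rank A)%N.
  by have := limg_ker_dim f3 fullv; rewrite dim_mat => <-; apply: leq_addl.
have hW : (\dim (Wsp (phi A)) <= \rank (phi A) * \rank (phi A))%N.
  by have := limg_ker_dim (linfun (mulmxr (row_base (phi A)) \o mulmx (col_base (phi A)))) fullv;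
    rewrite dim_mat => <-; apply: leq_addl.
have hker := limg_ker_dim F V.
have hkerS : (\dim (V :&: lker F) <= \dim (lker F))%N by apply: dimvS; apply: capvSr.
have hsum := dimv_sum_cap V1 V2.
have h1 := dimvS hsubW.
have h2 := dimvS hcap.
have hdimV1' : \dim V1 = (r * d)%N by rewrite -rA.
have hdimV2' : \dim V2 = (d * r)%N by rewrite -rA.
have hf3' : (\dim (limg f3) <= r * r)%N by rewrite -rA.
have hW' : (\dim (Wsp (phi A)) <= s * s)%N by rewrite -rs.
clear hdimV1 hdimV2 hf3 hW.
move: hker hkerS hsum h1 h2 hdimV1' hdimV2' hf3' hW'.
rewrite -/F -/V.
set a1 := \dim (V :&: lker F); set a2 := \dim (F @: V); set a3 := \dim V.
set a4 := \dim (lker F); set a5 := \dim (V1 :&: V2); set a6 := \dim V1; set a7 := \dim V2.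
set a8 := \dim (limg f3); set a9 := \dim (Wsp (phi A)).
move=> *; nia.
Qed.
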